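(* For each integer $n\geq 3$, the Johnson graph $J(n,2)$ satisfies $\operatorname{tww}(J(n,2))\leq 2(n-3)$.
   Context: All graphs are finite and simple. The Johnson graph $J(n,2)$ has vertex set the 2-element subsets of $\{1,\dots,n\}$, two vertices $S,S'$ being adjacent iff $|S\cap S'|=1$. A trigraph is a graph whose edges are each colored red or black; a graph is viewed as a trigraph with all edges black; the red degree of a vertex is the number of red edges incident to it. For a partition $\mathcal{P}$ of $V(G)$, the quotient trigraph $G/\mathcal{P}$ has vertex set $\mathcal{P}$; two distinct parts $U,W$ are joined by a black edge if every pair $\{u,w\}$ with $u\in U,w\in W$ is a black edge of $G$, are non-adjacent if no such pair is an edge, and are joined by a red edge otherwise. A contraction sequence of an $N$-vertex trigraph $G$ is a sequence $\mathcal{P}_N,\dots,\mathcal{P}_1$ of partitions of $V(G)$ where $\mathcal{P}_N$ is the partition into singletons and each $\mathcal{P}_i$ arises from $\mathcal{P}_{i+1}$ by merging two parts; its width is the maximum red degree over all $G/\mathcal{P}_i$, and the twin-width $\operatorname{tww}(G)$ is the minimum width of a contraction sequence. *)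

(* Defs.v *)
From mathcomp Require Import all_boot.
Set Implicit Arguments. Unset Strict Implicit. Unset Printing Implicit Defensive.

(* Trigraphs on a finite vertex type T: [black] and [red] are the (symmetric,
   irreflexive, disjoint) black and red edge relations. A graph is the trigraph
   whose red relation is empty. *)
Section Twinwidth.
Variable T : finType.
Variables (black red : rel T).

Definition tedge (x y : T) : bool := black x y || red x y.

Definition qblack (U W : {set T}) : bool :=
  [forall u in U, forall w in W, black u w].
Definition qnonadj (U W : {set T}) : bool :=
  [forall u in U, forall w in W, ~~ tedge u w].
Definition qred (U W : {set T}) : bool :=
  [&& U != W, ~~ qblack U W & ~~ qnonadj U W].

Definition red_degree (P : {set {set T}}) (U : {set T}) : nat :=
  #|[set W in P | qred U W]|.

Definition quotient_width (P : {set {set T}}) : nat :=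
  \max_(U in P) red_degree P U.

Definition singleton_partition : {set {set T}} := [set [set x] | x : T].

Definition merge_step (P Q : {set {set T}}) : bool :=
  [exists A in P, exists B in P,
     (A != B) && (Q == (P :\ A :\ B) :|: [set A :|: B])].

Definition contraction_sequence (s : seq {set {set T}}) : Prop :=
  match s with
  | [::] => False
  | P :: s' => [/\ P = singleton_partition, path merge_step P s' & size s = #|T|]
  end.

Definition seq_width (s : seq {set {set T}}) : nat :=
  \max_(P <- s) quotient_width P.

Definition tww_le (k : nat) : Prop :=
  exists s, contraction_sequence s /\ seq_width s <= k.

End Twinwidth.

Definition graph_tww_le (T : finType) (e : rel T) (k : nat) : Prop :=
  tww_le e (fun _ _ => false) k.

Definition johnson_vertex (n : nat) := {S : {set 'I_n} | #|S| == 2}.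

Arguments johnson_vertex : clear implicits.
Definition johnson_adj (n : nat) : rel (johnson_vertex n) :=
  fun S S' => #|val S :&: val S'| == 1.
Arguments johnson_adj n : clear implicits.

(* Main.v *)
Require Import Defs.
From mathcomp Require Import all_boot.
From mathcomp Require Import zify.
Set Implicit Arguments. Unset Strict Implicit. Unset Printing Implicit Defensive.


Definition adjn (a b c d : nat) : bool :=
  ((a == c) || (a == d) || (b == c) || (b == d)) && ~~ ((a == c) && (b == d)).

Definition lab (n k m a b : nat) : nat * nat :=
  if (b < k.-1) || ((b == k.-1) && (m <= a)) then (a, b)
  else if a < k then (a, n) else (n, n).

Variant lab_spec n k m a b : nat * nat -> Type :=
 | LS : (b < k.-1) || ((b == k.-1) && (m <= a)) -> lab_spec n k m a b (a, b)
 | LR : ~~ ((b < k.-1) || ((b == k.-1) && (m <= a))) -> a < k -> lab_spec n k m a b (a, n)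
 | LT : ~~ ((b < k.-1) || ((b == k.-1) && (m <= a))) -> k <= a -> lab_spec n k m a b (n, n).

Lemma labP n k m a b : lab_spec n k m a b (lab n k m a b).
Proof.
rewrite /lab; case: ifP => h; first exact: LS.
case: ifP => h'; [apply: LR | apply: LT]; rewrite ?h //; lia.
Qed.

Definition candb (n k m : nat) (lu l : nat * nat) : bool :=
  if lu.2 < n then (l.2 == n) && (l.1 < m)
  else if lu.1 < n then
    [|| (l.2 == n) && (l.1 < minn k (n-2)) && (l.1 != lu.1),
        (l.1 == n) && (l.2 == n) && (k <= n-2) |
        (lu.1 < m) && (l.2 == k.-1) && (m <= l.1 < k.-1)]
  else (l.2 == n) && (l.1 < k).

Definition cand (n k m : nat) (lu : nat * nat) : seq (nat * nat) :=
  if lu.2 < n then [seq (x, n) | x <- iota 0 m]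
  else if lu.1 < n then
    [seq (x, n) | x <- iota 0 (minn k (n-2)) & x != lu.1] ++ nseq (k <= n-2) (n, n) ++
    (if lu.1 < m then [seq (x, k.-1) | x <- iota m (k.-1 - m)] else [::])
  else [seq (x, n) | x <- iota 0 k].

Lemma candP n k m lu l : candb n k m lu l -> l \in cand n k m lu.
Proof.
case: l => p q; rewrite /candb /cand /=.
case: ifP => _.
  case/andP => /eqP -> hp; apply/mapP; exists p => //; rewrite mem_iota; lia.
case: ifP => _; last first.
  case/andP => /eqP -> hp; apply/mapP; exists p => //; rewrite mem_iota; lia.
case/or3P.
- case/andP => /andP [/eqP -> hp] hne; rewrite mem_cat; apply/orP; left.
  apply/mapP; exists p => //; rewrite mem_filter hne mem_iota; lia.
- case/andP => /andP [/eqP -> /eqP ->] hk; rewrite !mem_cat mem_nseq hk eqxx /=; by rewrite orbT.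
- case/andP => /andP [hl /eqP ->] hp; rewrite !mem_cat hl; apply/orP; right; apply/orP; right.
  apply/mapP; exists p => //; rewrite mem_iota; lia.
Qed.

Lemma count_neq_iota a s K : count (fun x => x != a) (iota s K) + (s <= a < s + K) = K.
Proof.
elim: K s => [|K IH] s /=; first by lia.
have := IH s.+1. case: (s =P a) => [<-|hne] /=; lia.
Qed.

Lemma A7 n k m a b : 4 <= n -> k <= n.-1 -> m <= k.-1 -> a < b < n ->
  size (cand n k m (lab n k m a b)) <= 2 * (n - 3).
Proof.
move=> h0 h1 h2 h3.
have ha : a < n by lia. have hb : b < n by lia.
case: labP => [s1|s1 t1|s1 t1]; rewrite /cand /= ?ltnn ?ha ?hb /=.
- rewrite size_map size_iota; lia.
- rewrite size_cat size_map size_filter size_cat size_nseq.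
  have := count_neq_iota a 0 (minn k (n-2)).
  case: (leqP k (n-2)) => hk /=; case: ifP => hm /=; rewrite ?size_map ?size_iota; lia.
- rewrite size_map size_iota; lia.
Qed.

Definition F (n : nat) (lu l : nat * nat) : bool :=
  if (lu.2 < n) && (l.2 < n) then adjn lu.1 lu.2 l.1 l.2
  else if (lu.2 < n) && (l.1 < n) then (l.1 == lu.1) || (l.1 == lu.2)
  else if (lu.1 < n) && (l.2 < n) then (lu.1 == l.1) || (lu.1 == l.2)
  else if (lu.1 < n) && (l.1 < n) then true
  else false.

Lemma A6 n k m a b c d : k <= n.-1 -> m <= k.-1 -> a < b < n -> c < d < n ->
  lab n k m a b != lab n k m c d -> ~~ candb n k m (lab n k m a b) (lab n k m c d) ->
  adjn a b c d = F n (lab n k m a b) (lab n k m c d).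
Proof.
move=> h1 h2 h3 h4.
have ha : a < n by lia. have hb : b < n by lia. have hc : c < n by lia. have hd : d < n by lia.
case: labP => [s1|s1 t1|s1 t1]; case: labP => [s2|s2 t2|s2 t2];
rewrite /candb /F /= ?xpair_eqE ?ltnn ?ha ?hb ?hc ?hd ?eqxx /=;
rewrite /adjn; move=> h5 h6.
all: try (timeout 20 (apply/idP/idP; lia)).
all: have hbc : (b == c) = false by lia.
all: have hbd : (b == d) = false by lia.
all: rewrite hbc hbd andbF !orbF /= andbT //.
Qed.

Ltac brute :=
  rewrite /lab /=;
  repeat (case: ifP => /= ?);
  rewrite ?xpair_eqE ?inE ?xpair_eqE /=;
  try (apply/idP/idP); lia.

Lemma A1 n k m a b c d : k <= n.-1 -> m < k.-1 -> a < b < n -> c < d < n ->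
  (lab n k m.+1 a b == lab n k m.+1 c d) =
  (lab n k m a b == lab n k m c d) ||
  ((lab n k m a b \in [:: (m, k.-1); (m, n)]) && (lab n k m c d \in [:: (m, k.-1); (m, n)])).
Proof. move=> *. brute. Qed.

Lemma A2 n k a b c d : 1 <= k -> k <= n - 2 -> a < b < n -> c < d < n ->
  (lab n k.-1 0 a b == lab n k.-1 0 c d) =
  (lab n k k.-1 a b == lab n k k.-1 c d) ||
  ((lab n k k.-1 a b \in [:: (k.-1, n); (n, n)]) && (lab n k k.-1 c d \in [:: (k.-1, n); (n, n)])).
Proof. move=> *. brute. Qed.

Lemma A3 n a b c d : 3 <= n -> a < b < n -> c < d < n ->
  (lab n n.-1 (n-2) a b == lab n n.-1 (n-2) c d) = (lab n (n-2) 0 a b == lab n (n-2) 0 c d).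
Proof. move=> *. brute. Qed.

Lemma A4 n a b c d : a < b < n -> c < d < n ->
  lab n n.-1 0 a b = lab n n.-1 0 c d -> a = c /\ b = d.
Proof. move=> h1 h2 /eqP. rewrite /lab; repeat (case: ifP => /= ?); rewrite ?xpair_eqE; move=> *; lia. Qed.

Lemma A5 n a b : a < b -> lab n 0 0 a b = (n, n).
Proof. move=> h; rewrite /lab /=; repeat (case: ifP => /= ?); lia || done. Qed.

Lemma A8 a b c d : a < b < 3 -> c < d < 3 -> (a != c) || (b != d) -> adjn a b c d.
Proof. rewrite /adjn. move=> *. lia. Qed.


Section Gen.
Variable T : finType.
Variable L : eqType.

Definition fib (f : T -> L) (x : T) : {set T} := [set y | f y == f x].
Definition part (f : T -> L) : {set {set T}} := [set fib f x | x : T].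

Lemma fib_eq f x y : (fib f x == fib f y) = (f x == f y).
Proof.
apply/eqP/eqP => [h|h].
  have : x \in fib f y by rewrite -h inE.
  by rewrite inE => /eqP.
by apply/setP => z; rewrite !inE h.
Qed.

Lemma in_part f W : reflect (exists x, W = fib f x) (W \in part f).
Proof.
apply: (iffP imsetP) => [[x _ ->]|[x ->]]; first by exists x.
by exists x.
Qed.

Lemma part_ext (f g : T -> L) : (forall x y, (f x == f y) = (g x == g y)) -> part f = part g.
Proof.
move=> h; have e : forall x, fib f x = fib g x.
  by move=> x; apply/setP => y; rewrite !inE h.
by apply/setP => W; apply/in_part/in_part => -[x ->]; exists x; rewrite e.
Qed.

Lemma merge_part (f g : T -> L) x0 y0 :
  f x0 != f y0 ->
  (forall x y, (g x == g y) = (f x == f y) ||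
     ((f x \in [:: f x0; f y0]) && (f y \in [:: f x0; f y0]))) ->
  merge_step (part f) (part g) /\ #|part g| = (#|part f|).-1.
Proof.
move=> hne H.
set A := fib f x0; set B := fib f y0.
have hAB : A != B by rewrite fib_eq.
have fibg : forall x, fib g x =
   if f x \in [:: f x0; f y0] then A :|: B else fib f x.
  move=> x; apply/setP => y; rewrite !inE H.
  case: ifP => hx; rewrite !inE in hx *.
    case/orP: hx => /eqP ->; rewrite eqxx ?orbT /= ?andbT;
    by case: (f y == f x0); case: (f y == f y0); rewrite ?orbT.
  by rewrite hx andbF orbF.
have eqPg : part g = part f :\ A :\ B :|: [set A :|: B].
  apply/setP => W; rewrite !inE; apply/in_part/idP.
    move=> [x ->]; rewrite fibg; case: ifP => hx; first by rewrite eqxx orbT.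
    have xP : fib f x \in part f by apply/in_part; exists x.
    rewrite !fib_eq xP andbT.
    move: hx; rewrite !inE; case: (f x == f y0); case: (f x == f x0) => //.
  case/orP.
    case/andP => hWB /andP [hWA /in_part [x hW]]; exists x; rewrite fibg.
    move: hWB hWA; rewrite hW !fib_eq !inE => /negbTE -> /negbTE ->; done.
  move/eqP => ->; exists x0; rewrite fibg !inE eqxx //.
have AP : A \in part f by apply/in_part; exists x0.
have BP : B \in part f by apply/in_part; exists y0.
split.
  apply/existsP; exists A; rewrite AP /=; apply/existsP; exists B; rewrite BP /= hAB /=.
  by rewrite eqPg.
rewrite eqPg setUC cardsU1 (cardsD1 A (part f)) AP (cardsD1 B (part f :\ A)) !inE BP.
rewrite (eq_sym B A) hAB /=.
have -> : [&& A :|: B != B, A :|: B != A & A :|: B \in part f] = false.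
  apply/negP => /andP [h1 /andP [h2 /in_part [z hz]]].
  have : x0 \in fib f z by rewrite -hz !inE eqxx.
  rewrite inE eq_sym -fib_eq => /eqP hzA.
  by move: h2; rewrite hz hzA eqxx.
by [].
Qed.

End Gen.

Section Build.
Variable T : finType.
Variables black red : rel T.
Variable Good : {set {set T}} -> Prop.
Hypothesis step : forall P, Good P -> 1 < #|P| -> exists Q, [/\ merge_step P Q, #|Q| = (#|P|).-1 & Good Q].

Lemma build N : forall P : {set {set T}}, #|P| = N.+1 -> Good P ->
  exists s, [/\ path (@merge_step T) P s, size s = N & forall Q, Q \in P :: s -> Good Q].
Proof.
elim: N => [|N IH] P hP gP.
  exists [::]; split => // Q; rewrite inE => /eqP ->; done.
have [Q [mPQ cQ gQ]] := step gP (ltac:(rewrite hP; done)).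
have [s [ps ss gs]] := IH Q (ltac:(rewrite cQ hP; done)) gQ.
exists (Q :: s); split => //=; first by rewrite mPQ.
  by rewrite ss.
move=> R; rewrite inE => /orP [/eqP -> //|]; exact: gs.
Qed.

Lemma tww_from_good k : Good (singleton_partition T) -> 0 < #|T| ->
  (forall P, Good P -> quotient_width black red P <= k) -> tww_le black red k.
Proof.
move=> g0 hT hw.
have cs : #|singleton_partition T| = (#|T|.-1).+1.
  rewrite /singleton_partition card_imset; last exact: set1_inj.
  by rewrite prednK.
have [s [ps ss gs]] := build cs g0.
exists (singleton_partition T :: s); split.
  by split => //=; rewrite ss prednK.
rewrite /seq_width; apply/bigmax_leqP_seq => Q hQ _; exact: hw (gs Q hQ).
Qed.
End Build.


Section J.
Variable n : nat.
Local Notation V := (johnson_vertex n).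

Definition hi (v : V) : nat := \max_(i in val v) (i : nat).
Definition lo (v : V) : nat := (\sum_(i in val v) (i : nat)) - hi v.

Lemma set2E (x y : 'I_n) : (x : nat) < y ->
  \max_(i in [set x; y]) (i : nat) = y /\ \sum_(i in [set x; y]) (i : nat) = x + y.
Proof.
move=> h.
have hx : x \notin [set y] by rewrite inE -val_eqE /=; lia.
rewrite !big_setU1 // !big_set1 /=; split => //; apply/maxn_idPr; exact: ltnW.
Qed.

Lemma vertP (v : V) : exists x y : 'I_n, (x : nat) < y /\ val v = [set x; y].
Proof.
have := valP v; case/cards2P => x [y [hxy ->]].
case: (ltngtP x y) => h.
- by exists x, y.
- by exists y, x; rewrite setUC.
- by move: hxy; rewrite -val_eqE /= h eqxx.
Qed.

Lemma loP (v : V) (x y : 'I_n) : (x : nat) < y -> val v = [set x; y] -> lo v = x /\ hi v = y.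
Proof.
move=> h e; rewrite /lo /hi e; have [-> ->] := set2E h; split => //; lia.
Qed.

Lemma lohi (v : V) : lo v < hi v < n.
Proof.
have [x [y [h e]]] := vertP v; have [-> ->] := loP h e; rewrite h /=; exact: ltn_ord.
Qed.

Lemma card_set2I (x y : 'I_n) (S : {set 'I_n}) : x != y ->
  #|[set x; y] :&: S| = (x \in S) + (y \in S).
Proof.
move=> hxy.
case hx: (x \in S); case hy: (y \in S) => /=.
- rewrite (setIidPl _) ?cards2 ?hxy //; apply/subsetP => z; rewrite !inE => /orP [] /eqP ->; by [].
- have -> : [set x; y] :&: S = [set x].
    apply/setP => z; rewrite !inE; case: (z =P x) => [->|_]; first by rewrite hx.
    by case: (z =P y) => [->|_]; rewrite ?hy.
  by rewrite cards1.
- have -> : [set x; y] :&: S = [set y].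
    apply/setP => z; rewrite !inE; case: (z =P x) => [->|_]; first by rewrite hx (negbTE hxy).
    by case: (z =P y) => [->|_]; rewrite ?hy.
  by rewrite cards1.
- have -> : [set x; y] :&: S = set0.
    apply/setP => z; rewrite !inE; case: (z =P x) => [->|_]; first by rewrite hx.
    by case: (z =P y) => [->|_]; rewrite ?hy.
  by rewrite cards0.
Qed.

Lemma adjE (u v : V) : johnson_adj n u v = adjn (lo u) (hi u) (lo v) (hi v).
Proof.
have [x [y [h e]]] := vertP u; have [x' [y' [h' e']]] := vertP v.
have [-> ->] := loP h e; have [-> ->] := loP h' e'.
rewrite /johnson_adj e e' card_set2I; last by rewrite -val_eqE /=; lia.
rewrite !inE -!val_eqE /= /adjn.
case: (nat_of_ord x =P nat_of_ord x') => ?; case: (nat_of_ord x =P nat_of_ord y') => ?;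
case: (nat_of_ord y =P nat_of_ord x') => ?; case: (nat_of_ord y =P nat_of_ord y') => ? /=; lia.
Qed.

Lemma enc_inj (u v : V) : lo u = lo v -> hi u = hi v -> u = v.
Proof.
have [x [y [h e]]] := vertP u; have [x' [y' [h' e']]] := vertP v.
have [-> ->] := loP h e; have [-> ->] := loP h' e' => /val_inj ex /val_inj ey.
by apply: val_inj; rewrite e e' ex ey.
Qed.

Lemma enc_surj a b : a < b < n -> exists v : V, lo v = a /\ hi v = b.
Proof.
case/andP => hab hbn.
have han : a < n by lia.
pose x := Ordinal han; pose y := Ordinal hbn.
have hS : #|[set x; y]| == 2.
  by rewrite cards2; have -> : x != y by rewrite -val_eqE /=; lia.
exists (exist _ [set x; y] hS).
by have := @loP (exist _ [set x; y] hS) x y hab erefl.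
Qed.

Definition labv k m (v : V) : nat * nat := lab n k m (lo v) (hi v).

Definition Good (P : {set {set V}}) : Prop :=
  exists k m, [/\ k <= n.-1, m <= k.-1 & P = part (labv k m)].



Lemma width k m : 3 <= n -> k <= n.-1 -> m <= k.-1 ->
  quotient_width (johnson_adj n) (fun _ _ => false) (part (labv k m)) <= 2 * (n - 3).
Proof.
move=> hn hk hm; set f := labv k m.
apply/bigmax_leqP => U /in_part [u ->]; rewrite /red_degree.
have key : forall w, qred (johnson_adj n) (fun _ _ => false) (fib f u) (fib f w) ->
    (n != 3) && candb n k m (f u) (f w).
  move=> w /and3P [hne hb hna].
  move: hb => /forall_inPn [u1 u1U /forall_inPn [w1 w1W nadj]].
  move: hna => /forall_inPn [u2 u2U /forall_inPn [w2 w2W adj2]].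
  rewrite /tedge orbF negbK in adj2.
  rewrite fib_eq in hne.
  move: u1U u2U w1W w2W; rewrite !inE => /eqP e1 /eqP e2 /eqP e3 /eqP e4.
  have l1 := lohi u1; have l2 := lohi u2; have l3 := lohi w1; have l4 := lohi w2.
  case: (n =P 3) => [h3|h3] /=.
    exfalso; move: nadj; rewrite adjE; apply/negP/negPn.
    apply: A8; rewrite -?h3 //.
    rewrite -negb_and; apply/negP => /andP [/eqP ha /eqP hb].
    by move: hne; rewrite -e1 -e3 /f /labv ha hb eqxx.
  apply/negPn/negP => nc.
  have E1 := @A6 n k m _ _ _ _ hk hm l1 l3.
  have E2 := @A6 n k m _ _ _ _ hk hm l2 l4.
  move: nadj; rewrite adjE.
  rewrite (E1 _ _); last 2 first.
  - by rewrite -/(labv k m u1) -/(labv k m w1) -/f e1 e3.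
  - by rewrite -/(labv k m u1) -/(labv k m w1) -/f e1 e3.
  move: adj2; rewrite adjE (E2 _ _); last 2 first.
  - by rewrite -/(labv k m u2) -/(labv k m w2) -/f e2 e4.
  - by rewrite -/(labv k m u2) -/(labv k m w2) -/f e2 e4.
  rewrite -/(labv k m u1) -/(labv k m w1) -/(labv k m u2) -/(labv k m w2) -/f e1 e2 e3 e4.
  by move=> ->.
case: (n =P 3) => [h3|h3].
  have -> : 2 * (n - 3) = 0 by lia.
  rewrite leqn0 cards_eq0; apply/eqP/setP => W; rewrite !inE.
  apply/negP => /andP [/in_part [w ->] /key]; by rewrite h3.
pose fibl (l : nat * nat) := [set y | f y == l].
have sub : [set W in part f | qred (johnson_adj n) (fun _ _ => false) (fib f u) W]
    \subset [seq fibl l | l <- cand n k m (f u)].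
  apply/subsetP => W; rewrite inE => /andP [/in_part [w ->] /key /andP [_ hc]].
  have -> : fib f w = fibl (f w) by apply/setP => z; rewrite !inE.
  by apply: map_f; apply: candP.
apply: leq_trans (subset_leq_card sub) _.
apply: leq_trans (card_size _) _; rewrite size_map.
have := lohi u => hu.
apply: A7 => //; lia.
Qed.


Lemma lab_x0 k m : m < k.-1 -> lab n k m m k.-1 = (m, k.-1).
Proof. move=> h; case: labP => [s|s t|s t] //; lia. Qed.

Lemma lab_y0 k m : m < k -> 1 <= k -> lab n k m m k = (m, n).
Proof. move=> h h'; case: labP => [s|s t|s t] //; lia. Qed.

Lemma lab_z0 k : 1 <= k -> lab n k k.-1 k k.+1 = (n, n).
Proof. move=> h; case: labP => [s|s t|s t] //; lia. Qed.

Lemma step_core k m : 3 <= n -> 1 <= k -> k <= n.-1 -> m <= k.-1 ->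
  (m < k.-1) || (k <= n - 2) ->
  exists Q, [/\ merge_step (part (labv k m)) Q, #|Q| = (#|part (labv k m)|).-1 & Good Q].
Proof.
move=> hn hk1 hk hm.
case: (ltnP m k.-1) => hmk /=.
  have [x0 [ex0 ey0]] := @enc_surj m k.-1 (ltac:(lia)).
  have [y0 [fx0 fy0]] := @enc_surj m k (ltac:(lia)).
  have [M C] := @merge_part _ _ (labv k m) (labv k m.+1) x0 y0
    (ltac:(rewrite /labv ex0 ey0 fx0 fy0 lab_x0 // lab_y0 //; [rewrite xpair_eqE; lia | lia]))
    (ltac:(move=> x y; rewrite /labv ex0 ey0 fx0 fy0 lab_x0 // lab_y0 //; try lia;
           apply: A1 => //; exact: lohi)).
  exists (part (labv k m.+1)); split => //.
  exists k, m.+1; split => //; lia.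
move=> hkn; have hm' : m = k.-1 by lia.
subst m.
have [x0 [ex0 ey0]] := @enc_surj k.-1 k (ltac:(lia)).
have [y0 [fx0 fy0]] := @enc_surj k k.+1 (ltac:(lia)).
have e1 : lab n k k.-1 k.-1 k = (k.-1, n) by rewrite lab_y0 //; lia.
have [M C] := @merge_part _ _ (labv k k.-1) (labv k.-1 0) x0 y0
    (ltac:(rewrite /labv ex0 ey0 fx0 fy0 e1 lab_z0 // xpair_eqE; lia))
    (ltac:(move=> x y; rewrite /labv ex0 ey0 fx0 fy0 e1 lab_z0 //;
           apply: A2 => //; exact: lohi)).
exists (part (labv k.-1 0)); split => //.
exists k.-1, 0; split => //; lia.
Qed.

Lemma step P : 3 <= n -> Good P -> 1 < #|P| ->
  exists Q, [/\ merge_step P Q, #|Q| = (#|P|).-1 & Good Q].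
Proof.
move=> hn [k [m [hk hm ->]]] hc.
case: (posnP k) => hk0.
  subst k; exfalso.
  have : #|part (labv 0 m)| <= 1.
    have sub : part (labv 0 m) \subset [set setT].
      apply/subsetP => W /in_part [w ->]; rewrite inE; apply/eqP/setP => z.
      have m0 : m = 0 by lia.
      have hw := lohi w; have hz := lohi z.
      rewrite !inE /labv m0 !A5 ?eqxx //; lia.
    by apply: leq_trans (subset_leq_card sub) _; rewrite cards1.
  by rewrite leqNgt hc.
case: (boolP ((m < k.-1) || (k <= n - 2))) => hcase.
  by apply: step_core.
have [ek em] : k = n.-1 /\ m = n - 2 by lia.
subst k m.
have -> : part (labv n.-1 (n - 2)) = part (labv (n - 2) 0).
  apply: part_ext => x y; rewrite /labv A3 //; exact: lohi.
apply: step_core => //; lia.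
Qed.

Lemma good0 : Good (singleton_partition V).
Proof.
exists n.-1, 0; split => //.
rewrite /singleton_partition /part; apply: eq_imset => x.
apply/setP => y; rewrite !inE /labv.
case: (y =P x) => [->|ne]; first by rewrite eqxx.
apply/esym/negbTE/eqP => e; apply: ne.
have [h1 h2] := A4 (lohi y) (lohi x) e.
exact: enc_inj.
Qed.

End J.


Unset Implicit Arguments.

Theorem mainTheorem18 (n : nat) (hn : 3 <= n) :
  graph_tww_le (johnson_adj n) (2 * (n - 3)).
Proof.
rewrite /graph_tww_le.
apply: (@tww_from_good _ _ _ (@Good n)).
- move=> P gP hP; exact: step.
- exact: good0.
- have [v _] := @enc_surj n 0 1 (ltac:(lia)).
  by apply/card_gt0P; exists v.
- move=> P [k [m [hk hm ->]]]; exact: width.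
Qed.
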